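(* Let $N\ge 2$. For every $N$-player game $G$ and every player $i\in A$, $$R_i(G)\le (N-1)\sum_{j\in A,\,j\neq i}R_j(G).$$
   Context: Let $A=\{1,\dots,N\}$ be a finite set of players. A game is any function $G:2^A\to\mathbb{R}$ (no normalization such as $G(\emptyset)=0$ is assumed). For a player $i$ and a coalition $S\subseteq A\setminus\{i\}$, the marginal contribution is $d_iG(S)=G(S\cup\{i\})-G(S)$. Let $f_i$ be a random subset of $A\setminus\{i\}$ with distribution $\Pr\{f_i=S\}=\frac{|S|!\,(N-|S|-1)!}{N!}$ for each $S\subseteq A\setminus\{i\}$. The Shapley value of $G$ for player $i$ is $V_i(G)=\mathbf{E}[d_iG(f_i)]$ and the Shapley uncertainty of $G$ for player $i$ is $R_i(G)=\mathrm{Var}[d_iG(f_i)]$. *)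

(* Defs.v *)
From mathcomp Require Import all_boot all_order all_algebra.
Set Implicit Arguments. Unset Strict Implicit. Unset Printing Implicit Defensive.
Import Order.TTheory GRing.Theory Num.Theory.
Local Open Scope ring_scope.

(* Players A = 'I_N; a game is any function from coalitions {set 'I_N} to R. *)
Definition game (R : realFieldType) (N : nat) := {set 'I_N} -> R.

Definition marg (R : realFieldType) (N : nat) (G : game R N) (i : 'I_N)
  (S : {set 'I_N}) : R := G (i |: S) - G S.

(* Pr{f_i = S} = |S|! (N - |S| - 1)! / N!  for S ⊆ A \ {i} *)
Definition shap_weight (R : realFieldType) (N : nat) (S : {set 'I_N}) : R :=
  ((#|S|)`! * (N - #|S| - 1)`!)%:R / (N`!)%:R.

(* expectation over the random coalition f_i *)
Definition shap_E (R : realFieldType) (N : nat) (i : 'I_N)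
  (X : {set 'I_N} -> R) : R :=
  \sum_(S : {set 'I_N} | i \notin S) shap_weight R S * X S.

Definition shapley_value (R : realFieldType) (N : nat) (G : game R N)
  (i : 'I_N) : R := shap_E i (marg G i).

Definition shapley_uncertainty (R : realFieldType) (N : nat) (G : game R N)
  (i : 'I_N) : R :=
  shap_E i (fun S => (marg G i S - shapley_value G i) ^+ 2).

(* Main.v *)
Require Import Defs.
From mathcomp Require Import all_boot all_order all_algebra zify ring lra.
Set Implicit Arguments. Unset Strict Implicit. Unset Printing Implicit Defensive.
Import Order.TTheory GRing.Theory Num.Theory.
Local Open Scope ring_scope.

Section OS.
Variables (R : realFieldType) (T : finType).

Fixpoint OS (n : nat) (U : {set T}) (H : seq T -> R) : R :=
  match n with
  | 0 => H [::]
  | n'.+1 => \sum_(x in U) OS n' (U :\ x) (fun s => H (rcons s x))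
  end.

Lemma set_rcons (s : seq T) x : [set y in rcons s x] = x |: [set y in s].
Proof. by apply/setP => y; rewrite !inE mem_rcons in_cons. Qed.

Lemma ord_step (U : {set T}) x s : x \in U -> uniq s -> [set y in s] = U :\ x ->
  uniq (rcons s x) /\ [set y in rcons s x] = U.
Proof.
move=> xU us hs; split.
  rewrite rcons_uniq us andbT; apply/negP => xs.
  have : x \in [set y in s] by rewrite inE.
  by rewrite hs !inE eqxx.
by rewrite set_rcons hs setD1K.
Qed.

Lemma OS_le n (U : {set T}) H1 H2 : #|U| = n ->
  (forall s, uniq s -> [set y in s] = U -> H1 s <= H2 s) ->
  OS n U H1 <= OS n U H2.
Proof.
elim: n U H1 H2 => [|n IH] U H1 H2 /= cU h.
  apply: h => //; rewrite (cards0_eq cU); apply/setP => y; by rewrite !inE.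
apply: ler_sum => x xU; apply: IH.
  by move: cU; rewrite (cardsD1 x) xU => -[].
by move=> s us hs; case: (ord_step xU us hs) => u2 h2; apply: h.
Qed.

Lemma OS_ext n (U : {set T}) H1 H2 : #|U| = n ->
  (forall s, uniq s -> [set y in s] = U -> H1 s = H2 s) ->
  OS n U H1 = OS n U H2.
Proof.
move=> cU h; apply/le_anti; rewrite !OS_le // => s us hs; by rewrite h.
Qed.

Lemma OS_sum n (U : {set T}) (I : finType) (P : pred I) (H : I -> seq T -> R) :
  OS n U (fun s => \sum_(j | P j) H j s) = \sum_(j | P j) OS n U (H j).
Proof.
elim: n U H => [|n IH] U H //=.
under eq_bigr do rewrite IH.
by rewrite exchange_big.
Qed.

Lemma OS_scale n (U : {set T}) (c : R) H :
  OS n U (fun s => c * H s) = c * OS n U H.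
Proof.
elim: n U H => [|n IH] U H //=.
rewrite mulr_sumr; apply: eq_bigr => x _; by rewrite IH.
Qed.

Lemma OS_const n (U : {set T}) (c : R) : #|U| = n -> OS n U (fun _ => c) = n`!%:R * c.
Proof.
elim: n U => [|n IH] U cU /=; first by rewrite mul1r.
rewrite (eq_bigr (fun _ => n`!%:R * c)); last first.
  move=> x xU; apply: IH; by move: cU; rewrite (cardsD1 x) xU => -[].
rewrite sumr_const cU -mulrnAl -mulr_natl -natrM. by rewrite factS mulnC.
Qed.


Definition predj (j : T) (s : seq T) : {set T} := [set y in take (index j s) s].

Lemma predj_in j s x : j \in s -> predj j (rcons s x) = predj j s.
Proof. by move=> js; rewrite /predj -cats1 index_cat js takel_cat // index_size. Qed.

Lemma predj_notin j s : j \notin s -> predj j (rcons s j) = [set y in s].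
Proof.
move=> js; rewrite /predj -cats1 index_cat (negbTE js) /= eqxx addn0.
by rewrite take_size_cat.
Qed.

Definition cw (n : nat) (U : {set T}) (j : T) (S : {set T}) : nat :=
  if S \subset U :\ j then (#|S|`! * (n - #|S| - 1)`!)%N else 0%N.

Lemma sub_step (U S : {set T}) j x : S \subset U :\ j ->
  (S \subset U :\ x :\ j) = (x \notin S).
Proof.
move=> hS; apply/idP/idP.
  move/subsetP=> h; apply/negP => xS; move: (h x xS); by rewrite !inE eqxx andbF.
move=> xS; apply/subsetP => y yS; move/subsetP: hS => /(_ y yS).
rewrite !inE => /andP[-> ->]; rewrite andbT /=.
by apply/negP => /eqP e; rewrite -e yS in xS.
Qed.

Lemma cw_step n (U : {set T}) j S : #|U| = n.+1 -> j \in U ->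
  cw n.+1 U j S = ((S == U :\ j) * n`! + \sum_(x in U | x != j) cw n (U :\ x) j S)%N.
Proof.
move=> cU jU; have cUj : #|U :\ j| = n by move: cU; rewrite (cardsD1 j) jU => -[].
rewrite /cw; case: ifP => hS; last first.
  have -> : (S == U :\ j) = false by apply/negP => /eqP e; rewrite e subxx in hS.
  rewrite mul0n add0n big1 // => x /andP[xU xj].
  case: ifP => // h; exfalso; move: hS; rewrite (subset_trans h) //.
  by apply/subsetP => y; rewrite !inE => /and3P[-> _ ->].
under eq_bigr => x /andP[xU xj] do rewrite (sub_step _ hS).
rewrite -big_mkcondr /= sum_nat_const.
have ->: #|(fun i : T => (i \in U) && (i != j) && (i \notin S))| = #|U :\ j :\: S|.
  apply: eq_card => x; rewrite !inE /=. rewrite -topredE /=; by case: (x \in U); case: (x == j); case: (x \in S).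
rewrite cardsD (setIidPr hS) cUj.
case: eqP => [e|ne].
  by rewrite e cUj subnn mul0n addn0 mul1n subSnn subnn muln1.
have lt : (#|S| < n)%N.
  rewrite -cUj; apply: proper_card; rewrite properEneq hS andbT.
  by apply/eqP.
rewrite mul0n add0n.
have [m hm] : exists m, (n - #|S| = m.+1)%N by exists (n - #|S| - 1)%N; lia.
have e1 : (n.+1 - #|S| - 1 = m.+1)%N by lia.
by rewrite e1 hm subn1 /= factS mulnCA.
Qed.


Lemma OS_pred n (U : {set T}) j (F : {set T} -> R) : #|U| = n -> j \in U ->
  OS n U (fun s => F (predj j s)) = \sum_(S : {set T}) (cw n U j S)%:R * F S.
Proof.
elim: n U => [|n IH] U cU jU.
  by rewrite (cards0_eq cU) inE in jU.
have cD : forall x, x \in U -> #|U :\ x| = n.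
  by move=> x xU; move: cU; rewrite (cardsD1 x) xU => -[].
rewrite /= (bigD1 j) //=.
have -> : OS n (U :\ j) (fun s => F (predj j (rcons s j))) = OS n (U :\ j) (fun _ => F (U :\ j)).
  apply: OS_ext; first exact: cD.
  move=> s us hs; rewrite predj_notin ?hs //.
  apply/negP => js; have : j \in [set y in s] by rewrite inE.
  by rewrite hs !inE eqxx.
rewrite OS_const ?cD //.
have -> : \sum_(x in U | x != j) OS n (U :\ x) (fun s => F (predj j (rcons s x))) =
   \sum_(x in U | x != j) \sum_(S : {set T}) (cw n (U :\ x) j S)%:R * F S.
  apply: eq_bigr => x /andP[xU xj].
  rewrite -IH ?cD //; last by rewrite !inE eq_sym xj.
  apply: OS_ext; first exact: cD.
  move=> s us hs; rewrite predj_in //.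
  have : j \in [set y in s] by rewrite hs !inE eq_sym xj.
  by rewrite inE.
under [RHS]eq_bigr do rewrite cw_step // natrD mulrDl.
rewrite big_split /=; congr (_ + _).
  rewrite (bigD1 (U :\ j)) //= eqxx mul1n big1 ?addr0 // => S /negbTE ->.
  by rewrite mul0n mul0r.
rewrite exchange_big /=; apply: eq_bigr => S _.
by rewrite natr_sum mulr_suml.
Qed.

Lemma telescope (G : {set T} -> R) (s : seq T) : uniq s ->
  \sum_(j <- s) (G (j |: predj j s) - G (predj j s)) = G [set y in s] - G set0.
Proof.
elim/last_ind: s => [|s x IH].
  have -> : [set y in [::] : seq T] = set0 by apply/setP => y; rewrite !inE.
  by rewrite big_nil subrr.
rewrite rcons_uniq => /andP[xs us].
rewrite -cats1 big_cat big_seq1 /= cats1.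
rewrite (eq_big_seq (fun j => G (j |: predj j s) - G (predj j s))); last first.
  by move=> j js; rewrite predj_in.
by rewrite IH // predj_notin // set_rcons [LHS]addrC addrA subrK.
Qed.

End OS.
Lemma sum_sqr_le (R : realFieldType) (I : finType) (P : pred I) (y : I -> R) :
 (\sum_(j | P j) y j) ^+ 2 <= #|P|%:R * \sum_(j | P j) y j ^+ 2.
Proof.
set a := \sum_(j | P j) y j; set b := \sum_(j | P j) y j ^+ 2.
have h : 0 <= \sum_(j | P j) \sum_(k | P k) (y j - y k) ^+ 2.
  by apply: sumr_ge0 => j _; apply: sumr_ge0 => k _; apply: sqr_ge0.
have e : forall j, \sum_(k | P k) (y j - y k) ^+ 2 = y j ^+ 2 *+ #|P| - (y j * a) *+ 2 + b.
  move=> j; under eq_bigr do rewrite sqrrB.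
  by rewrite big_split /= sumrB sumr_const sumrMnl mulr_sumr.
rewrite (eq_bigr _ (fun j _ => e j)) in h.
have e2 : \sum_(j | P j) (y j ^+ 2 *+ #|P| - (y j * a) *+ 2 + b)
   = b *+ #|P| - (a * a) *+ 2 + b *+ #|P|.
  rewrite big_split /= sumrB sumr_const; congr (_ - _ + _).
    by rewrite sumrMnl.
  by rewrite sumrMnl mulr_suml.
rewrite e2 -[b *+ _]mulr_natl -[(a * a) *+ 2]mulr_natl in h.
rewrite expr2.
have h2 : 0 <= #|P|%:R * b - a * a by lra.
lra.
Qed.

Theorem mainTheorem5 (R : realFieldType) (N : nat) (hN : (2 <= N)%N)
  (G : game R N) (i : 'I_N) :
  shapley_uncertainty G i <=
    (N - 1)%:R * \sum_(j : 'I_N | j != i) shapley_uncertainty G j.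
Proof.
have cT : #|[set: 'I_N]| = N by rewrite cardsT card_ord.
have fne : (N`!)%:R != 0 :> R by rewrite pnatr_eq0 -lt0n fact_gt0.
have fpos : 0 < (N`!)%:R :> R by rewrite ltr0n fact_gt0.
have transfer : forall j (F : {set 'I_N} -> R),
    OS N setT (fun s => F (predj j s)) = N`!%:R * shap_E j F.
  move=> j F; rewrite OS_pred // ?inE //.
  rewrite /shap_E mulr_sumr [RHS]big_mkcond /=; apply: eq_bigr => S _.
  rewrite /cw subsetD1 subsetT /=; case: (j \in S) => /=; first by rewrite mul0r.
  rewrite /shap_weight mulrA; congr (_ * _).
  by rewrite mulrC divfK.
have full : forall s, uniq s -> [set y in s] = setT ->
    \sum_j marg G j (predj j s) = G setT - G set0.
  move=> s us hs; rewrite -hs -telescope // [RHS]big_uniq //.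
  apply: eq_bigl => j; have : j \in [set y in s] by rewrite hs inE.
  by rewrite inE => ->.
have eff : \sum_j shapley_value G j = G setT - G set0.
  apply: (mulfI fne); rewrite mulr_sumr.
  under eq_bigr => j _ do rewrite /shapley_value -(transfer j (marg G j)).
  rewrite -OS_sum (OS_ext (H2 := fun _ => G setT - G set0)) //.
  by rewrite OS_const.
have key : N`!%:R * shapley_uncertainty G i <=
           N`!%:R * ((N - 1)%:R * \sum_(j : 'I_N | j != i) shapley_uncertainty G j).
  rewrite /shapley_uncertainty -(transfer i (fun S => (marg G i S - shapley_value G i) ^+ 2)).
  rewrite mulrCA mulr_sumr.
  under eq_bigr => j _ do rewrite -(transfer j (fun S => (marg G j S - shapley_value G j) ^+ 2)).
  rewrite -OS_sum -OS_scale; apply: OS_le => // s us hs /=.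
  have z : \sum_j (marg G j (predj j s) - shapley_value G j) = 0.
    by rewrite sumrB full // eff subrr.
  rewrite (bigD1 i) //= in z.
  move/eqP: z; rewrite addr_eq0 => /eqP ->; rewrite sqrrN.
  have := sum_sqr_le (fun j : 'I_N => j != i) (fun j => marg G j (predj j s) - shapley_value G j).
  have -> : #|(fun j : 'I_N => j != i)| = (N - 1)%N.
    have c1 := cardC1 i; rewrite card_ord in c1; rewrite subn1 -c1; by apply: eq_card.
  by [].
by rewrite ler_pM2l in key.
Qed.
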